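(* Let $R$ be a commutative Noetherian ring of prime characteristic $p$, let $G$ be an $x$-torsion-free left $R[x,f]$-module, and let $N$ be a special annihilator submodule of $G$. Then $G/N$ is $x$-torsion-free.
   Context: $R[x,f]$ is the Frobenius skew polynomial ring: free left $R$-module on $(x^i)_{i\ge0}$, $xr=r^px$. A left $R[x,f]$-module $M$ is $x$-torsion-free if $xm=0$ implies $m=0$. A special annihilator submodule of $G$ is one of the form $\{g:\theta g=0\ \forall\theta\in\mathfrak{B}\}$ for some graded two-sided ideal $\mathfrak{B}=\bigoplus_n\mathfrak{b}_nx^n$ of $R[x,f]$ ($(\mathfrak{b}_n)$ an ascending chain of ideals of $R$). *)

(* Defs.v *)
From HB Require Import structures.
From mathcomp Require Import all_boot all_order all_algebra.
Set Implicit Arguments. Unset Strict Implicit. Unset Printing Implicit Defensive.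
Import Order.TTheory GRing.Theory Num.Theory.
Local Open Scope ring_scope.

Definition is_ideal (R : comNzRingType) (I : pred R) : Prop :=
  [/\ 0 \in I,
      (forall a b, a \in I -> b \in I -> a + b \in I) &
      (forall r a, a \in I -> r * a \in I)].

Definition noetherian (R : comNzRingType) : Prop :=
  forall I : nat -> pred R,
    (forall n, is_ideal (I n)) ->
    (forall n, {subset I n <= I n.+1}) ->
    exists N, forall n, (N <= n)%N -> I n =i I N.

(* A left module over the Frobenius skew polynomial ring R[x,f] (xr = r^p x)
   is an R-module G together with the action of x: an additive map
   phi : G -> G with phi (r *: m) = r^p *: phi m. *)
Definition frobenius_action (R : comNzRingType) (G : lmodType R) (p : nat)
    (phi : G -> G) : Prop :=
  (forall m1 m2, phi (m1 + m2) = phi m1 + phi m2) /\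
  (forall (r : R) m, phi (r *: m) = r ^+ p *: phi m).

Definition x_torsion_free (R : comNzRingType) (G : lmodType R) (phi : G -> G) : Prop :=
  forall m, phi m = 0 -> m = 0.

(* An element theta = \sum_i s_i x^i of R[x,f] (coefficient list s) acting on g. *)
Definition skew_act (R : comNzRingType) (G : lmodType R) (phi : G -> G)
    (s : seq R) (g : G) : G :=
  \sum_(i < size s) s`_i *: iter i phi g.

(* theta = \sum_i s_i x^i lies in the graded ideal B = \bigoplus_n b_n x^n. *)
Definition in_graded (R : comNzRingType) (b : nat -> pred R) (s : seq R) : Prop :=
  forall i, s`_i \in b i.

(* b is an ascending chain of ideals of R (so B is a graded two-sided ideal). *)
Definition graded_ideal_chain (R : comNzRingType) (b : nat -> pred R) : Prop :=
  (forall n, is_ideal (b n)) /\ (forall n, {subset b n <= b n.+1}).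

Definition special_ann (R : comNzRingType) (G : lmodType R) (phi : G -> G)
    (b : nat -> pred R) (g : G) : Prop :=
  forall s, in_graded b s -> skew_act phi s g = 0.

(* Main.v *)
Require Import Defs.
From HB Require Import structures.
From mathcomp Require Import all_boot all_order all_algebra.
Import GRing.Theory.
Local Open Scope ring_scope.

Theorem lemma3p1 (R : comNzRingType) (p : nat) (G : lmodType R) (phi : G -> G)
    (b : nat -> pred R) :
  noetherian R -> p \in [pchar R] ->
  frobenius_action p phi -> x_torsion_free phi ->
  graded_ideal_chain b ->
  forall g : G, special_ann phi b (phi g) -> special_ann phi b g.
Proof.
move=> _ chp [phiD phiZ] tf [bI _] g Hg s Hs.
have pp := pcharf_prime chp.
have p0 : (0 < p)%N by apply: prime_gt0.
have phi0 : phi 0 = 0.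
  have h := phiD 0 0; rewrite addr0 in h.
  by apply: (@addrI _ (phi 0)); rewrite addr0 -h.
apply: tf.
pose s' := map (fun r => r ^+ p) s.
have Hs' : in_graded b s'.
  move=> i; case: (ltnP i (size s)) => hi.
    rewrite /s' (nth_map 0) //.
    have [b0 _ bM] := bI i.
    rewrite -(prednK p0) exprSr.
    by apply: bM; apply: Hs.
  rewrite nth_default ?size_map //.
  by have [b0 _ _] := bI i.
transitivity (skew_act phi s' (phi g)); last exact: Hg s' Hs'.
rewrite /skew_act size_map (big_morph phi phiD phi0).
apply: eq_bigr => i _.
rewrite phiZ /s' (nth_map 0) //.
by rewrite -iterSr.
Qed.
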